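(* There are constants $C_0,r>0$ such that for $k>\sqrt n$ the following holds with probability at least $1-e^{-n^r}$ over $G'\sim G(n,\tfrac12)$: for every set $K$ of $k$ vertices, if $G$ is obtained from $G'$ by adding all missing edges inside $K$, then every maximum clique $K'$ of $G$ satisfies $|K'\cap K|\ge k-C_0\log n$ and $|K'\setminus K|\le C_0\log n$.
   Context: $G(n,p)$ denotes the Erdős–Rényi random graph on $n$ vertices with edge probability $p$. Logarithms are base $2$. (This is the statement that, for $G\sim AG(n,\tfrac12,k)$ with $k>\sqrt n$, with extremely high probability—probability of the form $1-e^{-n^r}$—simultaneously for all adversarial choices, the maximum clique contains all but $O(\log n)$ vertices of the planted clique and at most $O(\log n)$ other vertices.) *)

(* Defs.v *)
From mathcomp Require Import all_boot.
From Stdlib Require Import Reals.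

Set Implicit Arguments.
Unset Strict Implicit.
Unset Printing Implicit Defensive.

Definition edges (n : nat) : {set {set 'I_n}} := [set e : {set 'I_n} | #|e| == 2].

(* A graph G' on 'I_n is an edge set E \subset edges n.
   G(n,1/2) is the uniform distribution on all such E. *)
Definition graphs (n : nat) : {set {set {set 'I_n}}} := powerset (edges n).

Definition gnp_half_prob (n : nat) (P : pred {set {set 'I_n}}) : R :=
  (INR #|[set E in graphs n | P E]| / INR #|graphs n|)%R.

Definition planted_adj (n : nat) (E : {set {set 'I_n}}) (K : {set 'I_n})
  (x y : 'I_n) : bool :=
  (x != y) && (([set x; y] \in E) || ((x \in K) && (y \in K))).

Definition is_clique (n : nat) (adj : 'I_n -> 'I_n -> bool) (S : {set 'I_n}) : bool :=
  [forall x in S, forall y in S, (x != y) ==> adj x y].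

Definition is_max_clique (n : nat) (adj : 'I_n -> 'I_n -> bool) (S : {set 'I_n}) : bool :=
  is_clique adj S && [forall T : {set 'I_n}, is_clique adj T ==> (#|T| <= #|S|)].

Definition Rleb (a b : R) : bool := if Rle_dec a b then true else false.

Definition log2 (x : R) : R := (ln x / ln 2)%R.

Definition good_event (n k : nat) (C0 : R) (E : {set {set 'I_n}}) : bool :=
  [forall K : {set 'I_n}, (#|K| == k) ==>
    [forall K' : {set 'I_n}, is_max_clique (planted_adj E K) K' ==>
       (Rleb (INR k - C0 * log2 (INR n))%R (INR #|K' :&: K|) &&
        Rleb (INR #|K' :\: K|) (C0 * log2 (INR n))%R)]].

(* Main.v *)
Require Import Defs.
From mathcomp Require Import all_boot.
From Stdlib Require Import Reals.
From Stdlib Require Import Lra.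
From mathcomp Require Import all_boot zify.

Lemma bin_le_pow n k : 'C(n, k) <= n ^ k.
Proof.
have h : 'C(n, k) <= 'C(n, k) * k`! by rewrite leq_pmulr // fact_gt0.
apply: (leq_trans h); rewrite bin_ffact.
elim: k {h} => [|k IH]; first by rewrite ffactn0.
rewrite ffactnSr; have -> : n ^ k.+1 = n ^ k * n by rewrite expnSr.
by rewrite leq_mul // leq_subr.
Qed.

Lemma card_bigcup_le (I T : finType) (P : pred I) (F : I -> {set T}) :
  #|\bigcup_(i | P i) F i| <= \sum_(i | P i) #|F i|.
Proof.
elim/big_rec2: _ => [|i x y _ H]; first by rewrite cards0.
apply: (leq_trans (leq_card_setU _ _)); by rewrite leq_add2l.
Qed.

Lemma card_bigcup_le_in (I T : finType) (A : {set I}) (F : I -> {set T}) :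
  #|\bigcup_(i in A) F i| <= \sum_(i in A) #|F i|.
Proof.
elim/big_rec2: _ => [|i x y _ H]; first by rewrite cards0.
apply: (leq_trans (leq_card_setU _ _)); by rewrite leq_add2l.
Qed.

Lemma exists_subset (T : finType) (A : {set T}) s :
  s <= #|A| -> exists2 X : {set T}, X \subset A & #|X| = s.
Proof.
elim: s => [|s IH] hs; first by exists (set0 : {set T}); rewrite ?sub0set ?cards0.
have [X XA cX] := IH (ltnW hs).
have : 0 < #|A :\: X| by rewrite cardsDS // cX subn_gt0.
rewrite card_gt0 => /set0Pn [x]; rewrite inE => /andP [xX xA].
exists (x |: X); first by rewrite subUset sub1set xA XA.
by rewrite cardsU1 xX cX.
Qed.

Lemma supersets (T : finType) (A B : {set T}) :
  B \subset A -> #|[set E in powerset A | B \subset E]| * 2 ^ #|B| <= 2 ^ #|A|.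
Proof.
move=> BA.
have sub : [set E in powerset A | B \subset E] \subset
           [set D :|: B | D in powerset (A :\: B)].
  apply/subsetP => E; rewrite inE powersetE => /andP [EA BE].
  apply/imsetP; exists (E :\: B); first by rewrite powersetE setSD.
  apply/setP => x; rewrite !inE; case: (boolP (x \in B)) => xB /=.
    by rewrite (subsetP BE).
  by rewrite orbF.
have h := leq_trans (subset_leq_card sub) (leq_imset_card _ _).
rewrite card_powerset cardsDS // in h.
have hb := subset_leq_card BA.
apply: (leq_trans (leq_mul h (leqnn _))).
by rewrite -expnD subnK.
Qed.

Definition fset2 {n} (X Z : {set 'I_n}) : {set {set 'I_n}} :=
  [set [set p.1; p.2] | p in setX X Z].

Definition pairs (n m z : nat) : {set {set 'I_n} * {set 'I_n}} :=
  [set p : {set 'I_n} * {set 'I_n} | [&& #|p.1| == m, #|p.2| == z & [disjoint p.1 & p.2]]].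

Definition Bad {n : nat} (m z : nat) (E : {set {set 'I_n}}) : bool :=
  [exists p in pairs n m z, fset2 p.1 p.2 \subset E].

Lemma card_fset2 {n} (X Z : {set 'I_n}) :
  [disjoint X & Z] -> #|fset2 X Z| = #|X| * #|Z|.
Proof.
move=> dXZ; rewrite /fset2 card_in_imset ?cardsX //.
move=> [u v] [u' v'] /setXP [/= uX vZ] /setXP [/= u'X v'Z] /= eq.
have : u \in [set u'; v'] by rewrite -eq set21.
rewrite in_set2 => /orP [/eqP eu|/eqP ev]; last first.
  by rewrite -ev (disjointFr dXZ uX) in v'Z.
subst u'.
have : v \in [set u; v'] by rewrite -eq set22.
rewrite in_set2 => /orP [/eqP ev|/eqP ->] //.
by rewrite ev (disjointFr dXZ uX) in vZ.
Qed.

Lemma fset2_edges n (X Z : {set 'I_n}) :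
  [disjoint X & Z] -> fset2 X Z \subset edges n.
Proof.
move=> dXZ; apply/subsetP => e /imsetP [[u v] /setXP [/= uX vZ] ->].
rewrite inE cards2; case: (u =P v) => [euv|] //.
by rewrite -euv (disjointFr dXZ uX) in vZ.
Qed.

Lemma bad_count n m z :
  #|[set E in graphs n | Bad m z E]| * 2 ^ (m * z) <= n ^ (m + z) * 2 ^ #|edges n|.
Proof.
have sub : [set E in graphs n | Bad m z E] \subset
  \bigcup_(p in pairs n m z) [set E in graphs n | fset2 p.1 p.2 \subset E].
  apply/subsetP => E; rewrite inE => /andP [EG /existsP [p /andP [pP sE]]].
  by apply/bigcupP; exists p => //; rewrite inE EG.
apply: (leq_trans (leq_mul (subset_leq_card sub) (leqnn _))).
apply: (leq_trans (leq_mul (card_bigcup_le_in _ _ _ _) (leqnn _))).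
rewrite big_distrl /=.
have step : forall p, p \in pairs n m z ->
   #|[set E in graphs n | fset2 p.1 p.2 \subset E]| * 2 ^ (m * z) <= 2 ^ #|edges n|.
  move=> p; rewrite inE => /and3P [/eqP c1 /eqP c2 d].
  rewrite -c1 -c2 -card_fset2 // /graphs; apply: supersets; exact: fset2_edges.
apply: leq_trans; first by apply: leq_sum; exact: step.
rewrite sum_nat_const leq_mul2r; apply/orP; right.
have sp : pairs n m z \subset setX [set X : {set 'I_n} | #|X| == m] [set X : {set 'I_n} | #|X| == z].
  by apply/subsetP => p; rewrite !inE => /and3P [-> -> _].
apply: (leq_trans (subset_leq_card sp)).
rewrite cardsX !card_draws card_ord expnD.
by apply: leq_mul; apply: bin_le_pow.
Qed.

Section RealPart.
Local Open Scope R_scope.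

Lemma INR_expn a b : INR (expn a b) = INR a ^ b.
Proof. elim: b => [|b IH] //; by rewrite expnS -multE mult_INR IH. Qed.

Lemma real_bound n a : (0 < n)%N -> 18 * log2 (INR n) < INR a -> (n ^ 18 < 2 ^ a)%N.
Proof.
move=> n0 h.
have l2 : 0 < ln 2 by have := ln_lt_2; lra.
have np : 0 < INR n by apply: lt_0_INR; apply/ltP.
have h' : 18 * ln (INR n) < INR a * ln 2.
  move: h; rewrite /log2 => h.
  have := Rmult_lt_compat_r (ln 2) _ _ l2 h.
  have e : 18 * (ln (INR n) / ln 2) * ln 2 = 18 * ln (INR n) by field; lra.
  rewrite e; lra.
apply/ltP; apply: INR_lt; rewrite !INR_expn.
apply: ln_lt_inv; try (apply: pow_lt; simpl; lra).
rewrite !ln_pow; try (simpl; lra).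
have -> : INR 18 = 18 by rewrite /INR; lra.
have -> : INR 2 = 2 by rewrite /INR; lra.
lra.
Qed.

End RealPart.

Definition mm n := (trunc_log 2 (n ^ 8)).+1.
Definition zz n k := maxn (mm n) (k - mm n).

Lemma mm_facts n : 1 < n -> [/\ 9 <= mm n, n ^ 8 < 2 ^ mm n & 2 ^ (2 * mm n) <= n ^ 18].
Proof.
move=> n1; rewrite /mm; split.
- rewrite ltnS; apply: trunc_log_max => //; by rewrite leq_exp2r.
- exact: trunc_log_ltn.
- have n8 : 0 < n ^ 8 by rewrite expn_gt0 (ltnW n1).
  have h := trunc_logP (p := 2) (n := n ^ 8) (erefl _) n8.
  move: h; set t := trunc_log 2 (n ^ 8) => h.
  have -> : 2 ^ (2 * t.+1) = 4 * (2 ^ t * 2 ^ t) by rewrite -expnD (_ : 4 = 2 ^ 2) // -expnD; congr (_ ^ _); lia.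
  have -> : n ^ 18 = n ^ 2 * (n ^ 8 * n ^ 8) by rewrite -!expnD.
  apply: leq_mul; last by apply: leq_mul.
  have -> : 4 = 2 ^ 2 by []. by rewrite leq_exp2r.
Qed.

Section Fail.
Local Open Scope R_scope.

Lemma fail_bad n k E : (1 < n)%N -> ~~ @good_event n k 18 E -> Bad (mm n) (zz n k) E.
Proof.
move=> n1 /forallPn [K]; rewrite negb_imply => /andP [/eqP cK /forallPn [K']].
rewrite negb_imply => /andP [/andP [cl mx] fail].
have kK' : (k <= #|K'|)%N.
  rewrite -cK; move/forallP: mx => /(_ K) /implyP; apply.
  apply/forallP => x; apply/implyP => xK; apply/forallP => y; apply/implyP => yK.
  apply/implyP => xy.
  by rewrite /planted_adj xy xK yK orbT.
set A := K' :\: K.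
have hAB : (#|K' :&: K| + #|A| = #|K'|)%N by rewrite cardsID.
have aL : 18 * log2 (INR n) < INR #|A|.
  have hk : INR k <= INR #|K' :&: K| + INR #|A|.
    rewrite -plus_INR; apply: le_INR; apply/leP; by rewrite plusE hAB.
  move: fail; rewrite negb_and /Rleb -/A.
  case: Rle_dec => h1; case: Rle_dec => h2 //= _.
  all: try exact: (Rnot_le_lt _ _ h2).
  move: (Rnot_le_lt _ _ h1) => h3; lra.
have n0 : (0 < n)%N by apply: ltnW.
have a_big := real_bound _ _ n0 aL.
have [m9 mlt m2] := mm_facts _ n1.
have mA : (2 * mm n < #|A|)%N.
  by rewrite -(ltn_exp2l _ _ (erefl : (1 < 2)%N)); apply: leq_ltn_trans m2 a_big.
have [X XA cX] := exists_subset _ A (mm n) (ltac:(lia)).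
have AK' : A \subset K' by apply: subsetDl.
have XK' : X \subset K' by apply: subset_trans XA AK'.
have cKX : #|K' :\: X| = (#|K'| - mm n)%N by rewrite cardsDS // cX.
have [Z ZK cZ] := exists_subset _ (K' :\: X) (zz n k) (ltac:(rewrite cKX /zz geq_max; apply/andP; split; lia)).
apply/existsP; exists (X, Z); rewrite inE /= cX cZ !eqxx /=.
apply/andP; split.
  rewrite -setI_eq0; apply/eqP/setP => x; rewrite !inE.
  case xX: (x \in X) => //=; apply/negP => xZ.
  by have := subsetP ZK x xZ; rewrite !inE xX.
apply/subsetP => e /imsetP [[u v] /setXP [/= uX vZ] ->].
have := subsetP XA u uX; rewrite inE => /andP [uK uK'].
have := subsetP ZK v vZ; rewrite inE => /andP [vX vK'].
have uv : u != v by apply/eqP => euv; rewrite -euv uX in vX.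
move/forallP: cl => /(_ u) /implyP /(_ uK') /forallP /(_ v) /implyP /(_ vK') /implyP /(_ uv).
by rewrite /planted_adj uv (negbTE uK) /= orbF.
Qed.

End Fail.

Lemma nat_final n k : (1 < n)%N ->
  (#|[set E in graphs n | Bad (mm n) (zz n k) E]| ^ 8 * 2 ^ (27 * k) <= (2 ^ #|edges n|) ^ 8)%N.
Proof.
move=> n1; have [m9 mlt _] := mm_facts _ n1.
have zm : (mm n <= zz n k)%N by apply: leq_maxl.
have zk : (k - mm n <= zz n k)%N by apply: leq_maxr.
move: (bad_count n (mm n) (zz n k)) zm zk mlt m9.
set B := #|_|; set m := mm n; set z := zz n k; set N := #|edges n| => h zm zk mlt m9.
have h8 : ((B * 2 ^ (m * z)) ^ 8 <= (n ^ (m + z) * 2 ^ N) ^ 8)%N by rewrite leq_exp2r.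
rewrite !expnMn in h8.
have e1 : ((n ^ (m + z)) ^ 8 <= 2 ^ (m * (m + z)))%N.
  rewrite expnAC expnM leq_exp2r; [exact: ltnW | lia].
have e2 : (2 ^ (27 * k) * 2 ^ (m * (m + z)) <= (2 ^ (m * z)) ^ 8)%N.
  rewrite -expnD -expnM; apply: leq_pexp2l => //; nia.
have : (B ^ 8 * 2 ^ (27 * k) * 2 ^ (m * (m + z)) <= 2 ^ (m * (m + z)) * (2 ^ N) ^ 8)%N.
  rewrite -mulnA; apply: leq_trans (leq_mul (leqnn _) e2) _.
  apply: leq_trans h8 _; by rewrite leq_mul2r e1 orbT.
by rewrite mulnC leq_pmul2l ?expn_gt0.
Qed.

Section RealFinal.
Local Open Scope R_scope.

Lemma exp_pow y j : exp y ^ j = exp (INR j * y).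
Proof.
elim: j => [|j IH]; first by rewrite /= Rmult_0_l exp_0.
change (exp y ^ j.+1) with (exp y * exp y ^ j).
rewrite IH -exp_plus S_INR; congr exp; ring.
Qed.

Lemma final_real (b G k : nat) (x : R) : (0 < G)%N ->
  (b ^ 8 * 2 ^ (27 * k) <= G ^ 8)%N -> 0 <= x < INR k -> INR b / INR G <= exp (- x).
Proof.
move=> G0 hn [x0 xk].
have Gp : 0 < INR G by apply: lt_0_INR; apply/ltP.
have H : INR b ^ 8 * exp (INR (27 * k) * ln 2) <= INR G ^ 8.
  rewrite -exp_pow exp_ln; last lra.
  have -> : 2 = INR 2 by rewrite /INR; lra.
  rewrite -!INR_expn -mult_INR; apply: le_INR; apply/leP; by rewrite multE.
suff hb : INR b <= exp (- x) * INR G.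
  have -> : INR b / INR G = INR b * / INR G by [].
  have -> : exp (- x) = exp (- x) * INR G * / INR G by field; lra.
  apply: Rmult_le_compat_r => //; apply: Rlt_le; apply: Rinv_0_lt_compat; lra.
apply: Rnot_lt_le => hlt.
have ep : 0 < exp (- x) by apply: exp_pos.
have h1 : (exp (- x) * INR G) ^ 8 <= INR b ^ 8.
  apply: pow_incr; split; [nra | lra].
rewrite Rpow_mult_distr exp_pow in h1.
have l2 := ln_lt_2.
have hk : INR (27 * k) * ln 2 > 8 * x.
  rewrite -multE mult_INR.
  have : INR k * ln 2 > INR k / 2 by nra.
  have -> : INR 27 = 27 by rewrite /INR; lra.
  lra.
have h2 : exp (INR 8 * - x) * exp (INR (27 * k) * ln 2) > 1.
  rewrite -exp_plus -exp_0; apply: exp_increasing.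
  have -> : INR 8 = 8 by rewrite /INR; lra.
  lra.
have G8 : 0 < INR G ^ 8 by apply: pow_lt.
have ep2 : 0 < exp (INR (27 * k) * ln 2) by apply: exp_pos.
nra.
Qed.

End RealFinal.

Local Open Scope R_scope.

Theorem proposition2p1 :
  exists C0 r : R, 0 < C0 /\ 0 < r /\
    forall n k : nat, sqrt (INR n) < INR k ->
      1 - exp (- Rpower (INR n) r) <= gnp_half_prob (@good_event n k C0).
Proof.
exists 18, (/ 2); split; first lra; split; first lra.
move=> n k hk; rewrite /gnp_half_prob.
have Gp : (0 < #|graphs n|)%N by rewrite card_powerset expn_gt0.
have Gr : 0 < INR #|graphs n| by apply: lt_0_INR; apply/ltP.
have ep : 0 < exp (- Rpower (INR n) (/ 2)) by apply: exp_pos.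
case: (leqP k n) => kn; last first.
  rewrite (_ : [set E in graphs n | @good_event n k 18 E] = graphs n).
    rewrite /Rdiv Rinv_r; lra.
  apply/setP => E; rewrite inE; case: (E \in graphs n) => //=.
  apply/forallP => K; apply/implyP => /eqP cK; exfalso.
  have := max_card K; rewrite card_ord cK => h.
  by move: (leq_ltn_trans h kn); rewrite ltnn.
have n1 : (1 < n)%N.
  rewrite ltnNge; apply/negP => n1.
  have hle : INR k <= INR n by apply: le_INR; apply/leP.
  have : (n = 0 \/ n = 1)%N by lia.
  case => en; rewrite en /= in hk hle.
    rewrite sqrt_0 in hk; lra.
  rewrite sqrt_1 in hk; lra.
have np : 0 < INR n by apply: lt_0_INR; apply/ltP; apply: ltnW.
rewrite Rpower_sqrt //.
set g := #|[set E in graphs n | @good_event n k 18 E]|.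
set Bn := #|[set E in graphs n | Bad (mm n) (zz n k) E]|.
have cover : (#|graphs n| <= g + Bn)%N.
  have sub : graphs n \subset [set E in graphs n | @good_event n k 18 E] :|:
                               [set E in graphs n | Bad (mm n) (zz n k) E].
    apply/subsetP => E EG; have EG2 : E \subset edges n by move: EG; rewrite /graphs powersetE.
    rewrite in_setU !in_set EG2 /=.
    case: (boolP (good_event k 18 E)) => //= ng.
    exact: (fail_bad _ _ _ n1 ng).
  exact: leq_trans (subset_leq_card sub) (leq_card_setU _ _).
have fr := final_real Bn (2 ^ #|edges n|) k (sqrt (INR n)) (expn_gt0 _ _) (nat_final n k n1) (conj (sqrt_pos _) hk).
rewrite /graphs card_powerset in Gr cover *.
have cR : INR (2 ^ #|edges n|) <= INR g + INR Bn.
  rewrite -plus_INR; apply: le_INR; apply/leP; by rewrite plusE.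
move: fr Gr cR; set G := INR (2 ^ #|edges n|) => fr Gr cR.
rewrite /Rdiv in fr *.
have q : 0 < / G by apply: Rinv_0_lt_compat.
have Gq : G * / G = 1 by field; lra.
have := Rmult_le_compat_r (/ G) _ _ (Rlt_le _ _ q) cR.
rewrite Rmult_plus_distr_r Gq; lra.
Qed.
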